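(* There is a polynomial $q$ such that for every $\mathsf{C\text{-}RASP}_+$ program $P$ with $L(P)\neq\emptyset$ there exists a string $w\in L(P)$ with $|w|\le 2^{q(|P|)}$. This exponential bound is optimal in the worst case: there is an infinite family of $\mathsf{C\text{-}RASP}_+$ programs $P_n$ with nonempty languages whose shortest accepted string has length exponential in $|P_n|$.
   Context: $\mathsf{C\text{-}RASP}_+$ formulas over a finite alphabet $\Sigma$: $\phi ::= \sigma \mid \neg\phi \mid \phi_1\wedge\phi_2 \mid \sum_{t\in\mathcal T}\alpha_t t\sim k$, terms $t ::= \#[\phi] \mid c$, with $\sigma\in\Sigma$, $\alpha_t,k,c\in\mathbb{N}$, ${\sim}\in\{\ge,>,=,<,\le\}$. At position $i$ of $w$: $w,i\models\sigma$ iff $w_i=\sigma$; Boolean connectives as usual; $\#[\phi]$ evaluates to $|\{j\in[1,i]: w,j\models\phi\}|$, $c$ to $c$, and comparisons are integer comparisons. $w\models\phi$ iff $w,|w|\models\phi$; $L(\phi)=\{w:w\models\phi\}$. Programs are straight-line (DAG) representations $(\phi_1,\dots,\phi_m)$ with references to earlier lines; the size $|P|$ is the total number of symbols with constants encoded in binary and each reference counted as 1. *)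

(* Defs.v *)
From HB Require Import structures.
From mathcomp Require Import all_boot all_order all_algebra.
Set Implicit Arguments. Unset Strict Implicit. Unset Printing Implicit Defensive.
Import GRing.Theory.

(* A term inside a counting comparison: #[line j]  or a constant c. *)
Inductive term := TCount of nat | TConst of nat.

Inductive cmp := CGe | CGt | CEq | CLt | CLe.

(* A program line; references (nat) point to earlier lines (0-indexed). *)
Inductive line (S : Type) :=
| LSym of S
| LNot of nat
| LAnd of nat & nat
| LCmp of seq (nat * term) & cmp & nat.      (* sum_t alpha_t t ~ k *)

Arguments LNot {S}. Arguments LAnd {S}. Arguments LCmp {S}.

Definition program (S : Type) := seq (line S).

Definition term_refs (t : term) : seq nat :=
  if t is TCount j then [:: j] else [::].

Definition line_refs S (l : line S) : seq nat :=
  match l with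
  | LSym _ => [::]
  | LNot j => [:: j]
  | LAnd j k => [:: j; k]
  | LCmp ts _ _ => flatten [seq term_refs t.2 | t <- ts]
  end.

Definition wf_program S (P : program S) : bool :=
  all (fun p => all (fun j => j < p.1) (line_refs p.2)) (zip (iota 0 (size P)) P).

Definition bits (n : nat) : nat := (trunc_log 2 n).+1.

Definition term_size (t : term) : nat :=
  match t with TCount _ => 2 | TConst c => bits c end.

Definition line_size S (l : line S) : nat :=
  match l with
  | LSym _ => 1
  | LNot _ => 2
  | LAnd _ _ => 3
  | LCmp ts _ k => sumn [seq bits t.1 + term_size t.2 + 1 | t <- ts] + 1 + bits k
  end.

Definition prog_size S (P : program S) : nat := sumn [seq line_size l | l <- P].

Definition cmp_eval (o : cmp) (x y : nat) : bool :=
  match o with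
  | CGe => y <= x | CGt => y < x | CEq => x == y | CLt => x < y | CLe => x <= y
  end.

Section Sem.
Variable S : eqType.

(* Position i (0-indexed) corresponds
   to position i+1 of the paper; #[phi] at position i counts positions 0..i. *)
Definition eval_line (w : seq S) (prev : seq (seq bool)) (l : line S) : seq bool :=
  let col j := nth [::] prev j in
  let valat j i := nth false (col j) i in
  let cnt j i := count id (take i.+1 (col j)) in
  let tval t i := match t with TCount j => cnt j i | TConst c => c end in
  let pos := iota 0 (size w) in
  match l with
  | LSym s => [seq x == s | x <- w]
  | LNot j => [seq ~~ valat j i | i <- pos]
  | LAnd j k => [seq valat j i && valat k i | i <- pos]
  | LCmp ts o k => [seq cmp_eval o (sumn [seq t.1 * tval t.2 i | t <- ts]) k | i <- pos]
  end.

Definition eval_program (w : seq S) (P : program S) : seq (seq bool) :=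
  foldl (fun prev l => rcons prev (eval_line w prev l)) [::] P.

Definition accepts (P : program S) (w : seq S) : bool :=
  (0 < size w) && nth false (last [::] (eval_program w P)) (size w).-1.

Definition lang (P : program S) : seq S -> Prop := fun w => accepts P w.
End Sem.

(* Main.v *)
Require Import Defs.
From mathcomp Require Import all_boot all_order all_algebra.
From mathcomp Require Import zify.
Import GRing.Theory.

Definition del {T : Type} (i : nat) (s : seq T) := take i s ++ drop i.+1 s.
Definition sh (i t : nat) := if t < i then t else t.+1.

Lemma nth_del T (x0 : T) i s t : nth x0 (del i s) t = nth x0 s (sh i t).
Proof.
rewrite /del /sh nth_cat size_take.
case: (ltnP i (size s)) => Hi.
- case: ltnP => Ht; first by rewrite nth_take.
  rewrite nth_drop; congr nth; lia.
- rewrite (drop_oversize (n:=i.+1)); last lia.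
  rewrite take_oversize //.
  case: ltnP => Ht; first by rewrite ifT //; lia.
  rewrite nth_nil; case: ifP => _; rewrite nth_default //; lia.
Qed.

Lemma size_del T i (s : seq T) : i < size s -> size (del i s) = (size s).-1.
Proof. move=> H; rewrite /del size_cat size_take size_drop H; lia. Qed.

Lemma del_nil T i : del i ([::] : seq T) = [::].
Proof. by []. Qed.

Lemma map_del T U (f : T -> U) i s : map f (del i s) = del i (map f s).
Proof. by rewrite /del map_cat map_take map_drop. Qed.

Definition good K i (c : seq bool) := ~~ nth false c i || (K <= count id (take i c)).

Lemma cnt_sum (c : seq bool) n : count id (take n c) = \sum_(0 <= k < n) nth false c k.
Proof.
elim: c n => [|b c IH] [|n] /=.
- by rewrite big_geq.
- by rewrite big1 // => k _; rewrite nth_nil.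
- by rewrite big_geq.
- by rewrite big_nat_recl // IH.
Qed.

Lemma cnt_del K i c t : good K i c ->
  minn K (count id (take t.+1 (del i c))) = minn K (count id (take (sh i t).+1 c)).
Proof.
rewrite /good !cnt_sum => Hg.
under eq_big_nat => k _ do rewrite nth_del.
rewrite /sh; case: ltnP => Ht.
- congr minn; apply: eq_big_nat => k /andP[_ Hk]; rewrite ifT //; lia.
- rewrite (big_cat_nat (n:=i)) //=; last lia.
  rewrite [in RHS](big_cat_nat (n:=i)) //=; last lia.
  rewrite [in RHS]big_nat_recl; last lia.
  have -> : \sum_(0 <= k < i) nth false c (if k < i then k else k.+1)
          = \sum_(0 <= k < i) nth false c k.
    by apply: eq_big_nat => k /andP[_ Hk]; rewrite Hk.
  have -> : \sum_(i <= k < t.+1) nth false c (if k < i then k else k.+1)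
          = \sum_(i <= k < t.+1) nth false c k.+1.
    by apply: eq_big_nat => k /andP[Hk _]; rewrite ltnNge Hk.
  move: Hg; case: (nth false c i) => /=; lia.
Qed.
Lemma minn_add K x x' y y' : minn K x = minn K x' -> minn K y = minn K y' ->
  minn K (x + y) = minn K (x' + y').
Proof. lia. Qed.

Lemma minn_mul K a x x' : minn K x = minn K x' -> minn K (a * x) = minn K (a * x').
Proof.
case: a => [|a] H; first by rewrite !mul0n.
case: (leqP K x) => Hx.
- have Hx' : K <= x' by lia.
  rewrite !(minn_idPl _) //; [apply: leq_trans Hx' _ | apply: leq_trans Hx _];
  by rewrite leq_pmull.
- have Hx' : x' = x by lia.
  by rewrite Hx'.
Qed.

Lemma minn_sumn A K (ts : seq A) F G : (forall x, minn K (F x) = minn K (G x)) ->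
  minn K (sumn (map F ts)) = minn K (sumn (map G ts)).
Proof. move=> H; elim: ts => //= x ts IH; exact: minn_add. Qed.

Lemma cmp_min K o x k : k < K -> cmp_eval o x k = cmp_eval o (minn K x) k.
Proof. by move=> Hk; case: o => /=; apply/idP/idP; lia. Qed.

Definition cmp_ok {S : Type} K (l : line S) := if l is LCmp _ _ k then k < K else true.

Lemma size_eval_line (S : eqType) (w : seq S) prev l : size (eval_line w prev l) = size w.
Proof. by case: l => /= *; rewrite size_map ?size_iota. Qed.

Lemma eval_line_del (S : eqType) K i (w : seq S) prev prev' l :
  i < size w -> (forall j, nth [::] prev' j = del i (nth [::] prev j)) ->
  (forall j, good K i (nth [::] prev j)) -> cmp_ok K l ->
  eval_line (del i w) prev' l = del i (eval_line w prev l).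
Proof.
move=> Hi Hp Hg Hl.
case: l Hl => [s|j|j k|ts o k] Hl; first by rewrite /= map_del.
all: apply: (@eq_from_nth _ false).
all: try by rewrite size_eval_line !size_del ?size_eval_line.
all: rewrite size_eval_line size_del // => t Ht; rewrite nth_del.
all: have Hst : sh i t < size w by rewrite /sh; case: ifP; lia.
all: rewrite /= (nth_map 0) ?size_iota ?size_del // nth_iota ?size_del //.
all: rewrite (nth_map 0) ?size_iota // nth_iota //.
- by rewrite Hp nth_del.
- by rewrite !Hp !nth_del.
- rewrite (cmp_min K) // [RHS](cmp_min K) //; congr cmp_eval.
  apply: minn_sumn => -[a [u|c]] //=; apply: minn_mul.
  by rewrite Hp cnt_del.
Qed.
Lemma eval_program_rcons (S : eqType) (w : seq S) P l :
  eval_program w (rcons P l) = rcons (eval_program w P) (eval_line w (eval_program w P) l).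
Proof. by rewrite /eval_program foldl_rcons. Qed.

Lemma size_eval_program (S : eqType) (w : seq S) P : size (eval_program w P) = size P.
Proof.
elim/last_ind: P => [|P l IH] //.
by rewrite eval_program_rcons !size_rcons IH.
Qed.

Lemma eval_program_del (S : eqType) K i (w : seq S) P : i < size w -> all (cmp_ok K) P ->
  (forall j, good K i (nth [::] (eval_program w P) j)) ->
  forall j, nth [::] (eval_program (del i w) P) j = del i (nth [::] (eval_program w P) j).
Proof.
move=> Hi; elim/last_ind: P => [|P l IH]; first by move=> _ _ j; rewrite !nth_nil.
rewrite all_rcons => /andP[Hl HP] Hg.
have HgP : forall j, good K i (nth [::] (eval_program w P) j).
  move=> j; case: (ltnP j (size (eval_program w P))) => Hj.
  - by have := Hg j; rewrite eval_program_rcons nth_rcons Hj.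
  - by rewrite nth_default // /good nth_nil.
have IH' := IH HP HgP.
move=> j; rewrite !eval_program_rcons !nth_rcons !size_eval_program.
case: ifP => // _; case: ifP => // _.
exact: (@eval_line_del S K).
Qed.

Lemma accepts_del (S : eqType) K i (w : seq S) P : i < (size w).-1 -> all (cmp_ok K) P ->
  (forall j, good K i (nth [::] (eval_program w P) j)) ->
  accepts P w -> accepts P (del i w).
Proof.
move=> Hi HP Hg /andP[_ Ha].
have Hi' : i < size w by lia.
rewrite /accepts size_del //; apply/andP; split; first lia.
rewrite -!nth_last !size_eval_program in Ha *.
rewrite (@eval_program_del S K) // nth_del /sh ifF; last lia.
have -> : (size w).-1.-1.+1 = (size w).-1 by lia.
exact: Ha.
Qed.
Lemma cnt_succ (c : seq bool) i : count id (take i.+1 c) = count id (take i c) + nth false c i.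
Proof. by rewrite !cnt_sum big_nat_recr. Qed.

Lemma exists_good (S : eqType) K (w : seq S) P : (size P * K).+1 < size w ->
  exists2 i, i < (size w).-1 & forall j, good K i (nth [::] (eval_program w P) j).
Proof.
move=> Hs.
set cols := eval_program w P.
have Hsz : size cols = size P by rewrite size_eval_program.
case E: (has (fun i => all (fun j => good K i (nth [::] cols j)) (iota 0 (size P)))
              (iota 0 (size w).-1)).
- case/hasP: E => i; rewrite mem_iota => /andP[_ Hi] /allP Ha.
  exists i; first by lia.
  move=> j; case: (ltnP j (size P)) => Hj.
  + by apply: Ha; rewrite mem_iota; lia.
  + by rewrite nth_default ?Hsz // /good nth_nil.
- move/negbT/hasPn: E => E.
  pose f i := \sum_(j < size P) minn K (count id (take i (nth [::] cols j))).
  have Hf : forall i, i <= (size w).-1 -> i <= f i.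
    elim => [|i IH] Hi; first by [].
    have Hi' : i < (size w).-1 by lia.
    have := E i; rewrite mem_iota Hi' /= => /(_ isT) /allPn [j0].
    rewrite mem_iota add0n /= => Hj0 Hbad.
    have IH' := IH (ltnW Hi).
    pose o := Ordinal Hj0.
    rewrite /f (bigD1 o) //=.
    rewrite /f in IH'; move: IH'; rewrite (bigD1 o) //= => IH'.
    have Hle : \sum_(j < size P | j != o) minn K (count id (take i (nth [::] cols j)))
             <= \sum_(j < size P | j != o) minn K (count id (take i.+1 (nth [::] cols j))).
      by apply: leq_sum => j _; rewrite cnt_succ; lia.
    move: Hbad; rewrite /good cnt_succ negb_or negbK -ltnNge => /andP[-> Hlt].
    rewrite addn1 (minn_idPr Hlt); rewrite (minn_idPr (ltnW Hlt)) in IH'.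
    apply: (leq_ltn_trans IH'); rewrite addSn ltnS leq_add2l; exact: Hle.
  have Hb : f (size w).-1 <= size P * K.
    rewrite /f; apply: (@leq_trans (\sum_(j < size P) K)).
    + by apply: leq_sum => j _; apply: geq_minl.
    + by rewrite sum_nat_const card_ord.
  have := Hf _ (leqnn _); lia.
Qed.

Lemma short_witness (S : eqType) K P (w : seq S) : all (cmp_ok K) P -> accepts P w ->
  exists w', accepts P w' /\ size w' <= (size P * K).+1.
Proof.
move=> HP.
have : forall n (w : seq S), size w < n -> accepts P w ->
   exists w', accepts P w' /\ size w' <= (size P * K).+1.
  elim => [|n IH] w0 Hs Ha; first by [].
  case: (leqP (size w0) (size P * K).+1) => H; first by exists w0.
  have [i Hi Hg] := @exists_good S K w0 P H.
  apply: (IH (del i w0)); last exact: (@accepts_del S K i w0 P Hi HP Hg Ha).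
  rewrite size_del; lia.
by move/(_ (size w).+1 w (ltnSn _)).
Qed.
Lemma bits_exp n : bits (2 ^ n) = n.+1.
Proof. by rewrite /bits trunc_expnK. Qed.

Lemma part2 (Sigma : finType) :
  (0 < #|Sigma|)%N ->
   exists (c : nat) (Pn : nat -> program Sigma), (0 < c)%N /\
     forall n, [/\ wf_program (Pn n),
                   (n <= prog_size (Pn n))%N,
                   (exists w, lang (Pn n) w) &
                   forall w, lang (Pn n) w -> (2 ^ (prog_size (Pn n) %/ c) <= size w)%N].
Proof.
case/card_gt0P => s _.
exists 8, (fun n => [:: LSym s; LCmp [:: (1, TCount 0)] CEq (2 ^ n)]); split => // n.
have Hsz : prog_size [:: LSym s; LCmp [:: (1, TCount 0)] CEq (2 ^ n)] = n + 7.
  rewrite /prog_size /= bits_exp /bits /=.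
  have -> : trunc_log 2 1 = 0 by rewrite (trunc_expnK 0).
  lia.
have Hacc : forall w : seq Sigma, lang [:: LSym s; LCmp [:: (1, TCount 0)] CEq (2 ^ n)] w ->
   count (pred1 s) w = 2 ^ n.
  move=> w; rewrite /lang /accepts /eval_program /= => /andP[Hw].
  rewrite (nth_map 0) ?size_iota; last lia.
  rewrite nth_iota; last lia.
  rewrite add0n prednK // take_oversize ?size_map // count_map mul1n addn0 => /eqP <-.
  by apply: eq_count => x.
split.
- by [].
- rewrite Hsz; lia.
- exists (nseq (2 ^ n) s).
  rewrite /lang /accepts /eval_program /= size_nseq expn_gt0 /=.
  rewrite (nth_map 0) ?size_iota; last by rewrite prednK // expn_gt0.
  rewrite nth_iota; last by rewrite prednK // expn_gt0.
  rewrite add0n prednK ?expn_gt0 // take_oversize ?size_map ?size_nseq // count_map /= mul1n addn0.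
  by rewrite count_nseq /= eqxx mul1n.
- move=> w Hw; have Hc := Hacc w Hw.
  have Hle := count_size (pred1 s) w.
  rewrite Hsz; apply: leq_trans Hle; rewrite Hc leq_exp2l //.
  lia.
Qed.
Lemma leq_sumn_mem (s : seq nat) x : x \in s -> x <= sumn s.
Proof.
elim: s => //= y s IH; rewrite in_cons => /orP[/eqP->|/IH]; lia.
Qed.

Lemma line_size_gt0 {S : Type} (l : line S) : 0 < line_size l.
Proof. by case: l => //= *; lia. Qed.

Lemma size_le_prog {S : Type} (P : program S) : size P <= prog_size P.
Proof.
rewrite /prog_size; elim: P => //= l P IH; have := line_size_gt0 (S:=S) l; lia.
Qed.

Lemma cmp_ok_gen {S : Type} s (Q : program S) :
  sumn [seq line_size l | l <- Q] <= s -> all (cmp_ok (2 ^ s)) Q.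
Proof.
elim: Q => //= l Q IH Hs; apply/andP; split; last by apply: IH; lia.
case: l Hs => //= ts o k Hs.
have Hk := trunc_log_ltn k (isT : 1 < 2).
apply: (leq_trans Hk); rewrite leq_exp2l //.
rewrite /bits in Hs; lia.
Qed.

Lemma cmp_ok_prog {S : Type} (P : program S) : all (cmp_ok (2 ^ prog_size P)) P.
Proof. exact: cmp_ok_gen. Qed.

Local Open Scope ring_scope.
Lemma part1 (Sigma : finType) :
  exists q : {poly nat},
     forall P : program Sigma, wf_program P ->
       (exists w, lang P w) ->
       exists w, lang P w /\ (size w <= 2 ^ q.[prog_size P])%N.
Proof.
exists ('X + 'X)%R => P _ [w Hw].
have [w' [Ha Hs]] := @short_witness Sigma _ P w (cmp_ok_prog P) Hw.
exists w'; split => //.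
rewrite hornerD hornerX.
have -> : (prog_size P + prog_size P)%R = (prog_size P + prog_size P)%N by [].
rewrite expnD.
have H1 := size_le_prog (S:=Sigma) P.
have H2 : (prog_size P < 2 ^ prog_size P)%N by apply: ltn_expl.
have H3 : (0 < 2 ^ prog_size P)%N by rewrite expn_gt0.
move: Hs H1 H2 H3; set X := (2 ^ prog_size P)%N; set m := size P; set s := prog_size P.
nia.
Qed.

Theorem proposition4p6 (Sigma : finType) :
  (exists q : {poly nat},
     forall P : program Sigma, wf_program P ->
       (exists w, lang P w) ->
       exists w, lang P w /\ (size w <= 2 ^ q.[prog_size P])%N)
  /\
  ((0 < #|Sigma|)%N ->
   exists (c : nat) (Pn : nat -> program Sigma), (0 < c)%N /\
     forall n, [/\ wf_program (Pn n),
                   (n <= prog_size (Pn n))%N,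
                   (exists w, lang (Pn n) w) &
                   forall w, lang (Pn n) w -> (2 ^ (prog_size (Pn n) %/ c) <= size w)%N]).
Proof.
split; [exact: part1 | exact: part2].
Qed.
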